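(* Fix $p\geq 3$ and put $\lambda=\lambda_p=2\cos(\pi/p)$. Let $[r_0;r_1,r_2,\dots]$ be an admissible $\lambda$-continued fraction. Then (i) if $m\geq 1$ and $r_m=r_{m+1}=\cdots=r_{m+j-1}=1$, then $j\leq p-3$; and (ii) if $r_0=r_1=\cdots=r_{j-1}=1$, then $j\leq p-2$.
   Context: Every finite real $\alpha$ is expanded by the ''next integral multiple of $\lambda$'' algorithm: $\alpha_0=\alpha$, and for $j\ge 0$, $r_j=\lfloor \alpha_j/\lambda\rfloor+1$ and $\alpha_{j+1}=\frac{1}{r_j\lambda-\alpha_j}$; the sequence $[r_0;r_1,\dots]$ is the $\lambda$-continued fraction of $\alpha$, where $[r_0;r_1,\dots,r_n]=r_0\lambda-\cfrac{1}{r_1\lambda-\cfrac{1}{\ddots-\cfrac{1}{r_n\lambda}}}$. A $\lambda$-continued fraction is admissible if it arises from some finite real number by this algorithm. *)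

(* Defs.v *)
From Stdlib Require Import Reals ZArith Arith.
Open Scope R_scope.

Definition lam (p : nat) : R := 2 * cos (PI / INR p).

(* floor x = Int_part x (Stdlib: Int_part x = up x - 1, the greatest integer <= x) *)
Definition rfloor (x : R) : Z := Int_part x.

Definition lcf_digit_of (p : nat) (x : R) : Z := (rfloor (x / lam p) + 1)%Z.

Fixpoint lcf_alpha (p : nat) (a : R) (n : nat) : R :=
  match n with
  | O => a
  | S n' => let x := lcf_alpha p a n' in
            / (IZR (lcf_digit_of p x) * lam p - x)
  end.

Definition lcf_digit (p : nat) (a : R) (n : nat) : Z :=
  lcf_digit_of p (lcf_alpha p a n).

(* Main.v *)
Require Import Defs.
From Stdlib Require Import Reals ZArith Arith Lra Lia.
Open Scope R_scope.

Lemma digit_bounds p x : 0 < lam p ->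
  0 < IZR (lcf_digit_of p x) * lam p - x <= lam p.
Proof.
  intros Hl. unfold lcf_digit_of, rfloor.
  destruct (base_Int_part (x / lam p)) as [H1 H2].
  rewrite plus_IZR.
  assert (E : x = (x / lam p) * lam p) by (field; lra).
  set (z := IZR (Int_part (x / lam p))) in *.
  set (w := x / lam p) in *. rewrite E.
  split; nra.
Qed.

Lemma digit1 p x : 0 < lam p -> lcf_digit_of p x = 1%Z -> 0 <= x < lam p.
Proof.
  intros Hl. unfold lcf_digit_of, rfloor. intros H.
  assert (Hz : Int_part (x / lam p) = 0%Z) by lia.
  destruct (base_Int_part (x / lam p)) as [H1 H2].
  rewrite Hz in H1, H2.
  assert (E : x = (x / lam p) * lam p) by (field; lra).
  set (w := x / lam p) in *. rewrite E. simpl in *. split; nra.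
Qed.

Lemma step (l s0 s1 s2 y : R) : 0 < s1 -> 0 < s2 -> l * s1 = s0 + s2 ->
  s0 / s1 <= y -> y < l -> s1 / s2 <= / (1 * l - y).
Proof.
  intros H1 H2 E Hy Hl.
  set (u := s0 / s1) in *.
  assert (E2 : s0 = u * s1) by (unfold u; field; lra).
  assert (E3 : s2 / s1 = l - u) by (apply (Rmult_eq_reg_r s1); [|lra]; field_simplify; nra).
  replace (s1 / s2) with (/ (s2 / s1)) by (field; lra).
  apply Rinv_le_contravar; [lra|].
  assert (0 < s2 / s1) by (apply Rdiv_lt_0_compat; lra). lra.
Qed.

Definition th (p : nat) := PI / INR p.
Definition s (p n : nat) := sin (INR n * th p).

Lemma INRp_pos p : (3 <= p)%nat -> 3 <= INR p.
Proof. intros. replace 3 with (INR 3) by (simpl; lra). apply le_INR; lia. Qed.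

Lemma s_pos p n : (3 <= p)%nat -> (0 < n < p)%nat -> 0 < s p n.
Proof.
  intros Hp Hn. unfold s, th. pose proof (INRp_pos p Hp). pose proof PI_RGT_0.
  assert (1 <= INR n) by (replace 1 with (INR 1) by reflexivity; apply le_INR; lia).
  assert (INR n < INR p) by (apply lt_INR; lia).
  apply sin_gt_0.
  - apply Rmult_lt_0_compat; [lra|]. apply Rdiv_lt_0_compat; lra.
  - replace PI with (INR p * (PI / INR p)) at 2 by (field; lra).
    apply Rmult_lt_compat_r; [apply Rdiv_lt_0_compat|]; lra.
Qed.

Lemma s_rec p n : lam p * s p (S n) = s p n + s p (S (S n)).
Proof.
  unfold lam, s. rewrite !S_INR.
  replace ((INR n + 1 + 1) * th p) with ((INR n + 1) * th p + PI / INR p) by (unfold th; ring).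
  replace (INR n * th p) with ((INR n + 1) * th p - PI / INR p) by (unfold th; ring).
  rewrite sin_plus, sin_minus. ring.
Qed.

Lemma lam_pos p : (3 <= p)%nat -> 0 < lam p.
Proof.
  intros Hp. unfold lam. pose proof (INRp_pos p Hp). pose proof PI_RGT_0.
  assert (0 < PI / INR p) by (apply Rdiv_lt_0_compat; lra).
  assert (PI / INR p < PI / 2).
  { apply Rmult_lt_compat_l; [lra|]. apply Rinv_lt_contravar; lra. }
  assert (0 < cos (PI / INR p)) by (apply cos_gt_0; lra). lra.
Qed.

Lemma s_end p : (3 <= p)%nat -> s p (p - 2) / s p (p - 1) = lam p.
Proof.
  intros Hp. pose proof (INRp_pos p Hp).
  assert (0 < s p 1) by (apply s_pos; lia).
  unfold s, th, lam in *. rewrite !minus_INR by lia. simpl (INR 2). simpl (INR 1) in *.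
  replace ((INR p - (1+1)) * (PI / INR p)) with (PI - 2 * (PI / INR p)) by (field; lra).
  replace ((INR p - 1) * (PI / INR p)) with (PI - (PI / INR p)) by (field; lra).
  rewrite !sin_PI_x, sin_2a. rewrite Rmult_1_l in *. field. lra.
Qed.

Lemma chain p a m k j : (3 <= p)%nat -> (k <= p - 2)%nat ->
  s p k / s p (S k) <= lcf_alpha p a m ->
  (forall i : nat, (i < j)%nat -> lcf_digit p a (m + i) = 1%Z) ->
  (p - 1 - k <= j)%nat -> False.
Proof.
  intros Hp Hk H0 Hd Hj. pose proof (lam_pos p Hp) as Hl.
  assert (C : forall i, (i <= p - 2 - k)%nat ->
     s p (k + i) / s p (S (k + i)) <= lcf_alpha p a (m + i)).
  { induction i as [|i IH]; intros Hi.
    - rewrite !Nat.add_0_r. exact H0.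
    - replace (m + S i)%nat with (S (m + i)) by lia.
      simpl lcf_alpha.
      pose proof (Hd i ltac:(lia)) as Di. unfold lcf_digit in Di. rewrite Di.
      replace (k + S i)%nat with (S (k + i)) by lia.
      apply (step (lam p) (s p (k + i))).
      + apply s_pos; lia.
      + apply s_pos; lia.
      + apply s_rec.
      + apply IH; lia.
      + apply (digit1 p _ Hl Di). }
  pose proof (C (p - 2 - k)%nat ltac:(lia)) as Cf.
  replace (k + (p - 2 - k))%nat with (p - 2)%nat in Cf by lia.
  replace (S (p - 2)) with (p - 1)%nat in Cf by lia.
  rewrite s_end in Cf by exact Hp.
  pose proof (Hd (p - 2 - k)%nat ltac:(lia)) as D. unfold lcf_digit in D.
  apply digit1 in D; [lra|exact Hl].
Qed.

Theorem lemma2p3 :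
  forall (p : nat), (3 <= p)%nat ->
  forall (a : R),
    (forall m j : nat, (1 <= m)%nat ->
       (forall i : nat, (i < j)%nat -> lcf_digit p a (m + i) = 1%Z) ->
       (j <= p - 3)%nat) /\
    (forall j : nat,
       (forall i : nat, (i < j)%nat -> lcf_digit p a i = 1%Z) ->
       (j <= p - 2)%nat).
Proof.
  intros p Hp a. pose proof (lam_pos p Hp) as Hl. split.
  - intros m j Hm Hd. destruct (le_lt_dec j (p - 3)) as [|Hj]; [assumption|].
    exfalso. apply (chain p a m 1 j Hp ltac:(lia)); [| exact Hd | lia].
    destruct m as [|m]; [lia|]. simpl lcf_alpha.
    pose proof (digit_bounds p (lcf_alpha p a m) Hl) as B.
    pose proof (s_rec p 0) as R. unfold s in R at 2. simpl (INR 0) in R.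
    rewrite Rmult_0_l, sin_0, Rplus_0_l in R.
    assert (0 < s p 1) by (apply s_pos; lia).
    replace (s p 1 / s p 2) with (/ lam p) by (rewrite <- R; field; lra).
    apply Rinv_le_contravar; lra.
  - intros j Hd. destruct (le_lt_dec j (p - 2)) as [|Hj]; [assumption|].
    exfalso. apply (chain p a 0 0 j Hp ltac:(lia)); [| exact Hd | lia].
    unfold s. simpl (INR 0). rewrite Rmult_0_l, sin_0, Rdiv_0_l.
    pose proof (Hd 0%nat ltac:(lia)) as D. unfold lcf_digit in D.
    replace (0 + 0)%nat with 0%nat in D by reflexivity. apply digit1 in D; [lra|exact Hl].
Qed.
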